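(* Let $\mathcal R=\{\rho(x)x:x\in\bar\Omega\}$ be a near field refractor (in either case $\kappa<-1$ or $-1<\kappa<0$) and let $P\in\bar D$. Then $\mathcal T_{\mathcal R}(P)$ is a closed subset of $\bar\Omega$.
   Context: $\Omega\subset S^{n-1}$ domain with $|\partial\Omega|=0$; $D\subset\mathbb R^n$ in an $(n-1)$-dimensional hypersurface, $\bar D$ compact, $0\notin\bar D$. Case $\kappa<-1$: there is $\tau\in(0,1-\frac1\kappa)$ with $\inf_{x\in\bar\Omega,P\in\bar D}x\cdot\frac P{|P|}\ge\tau+\frac1\kappa$; $r_0\in(0,\frac{\tau^2\kappa^2}{(1+\sqrt2)^2(1-\kappa)^2}\inf_{\bar D}|P|)$; $h(x,P,b)=\frac{(\kappa^2x\cdot P-b)-\sqrt{(\kappa^2x\cdot P-b)^2-(\kappa^2-1)(\kappa^2|P|^2-b^2)}}{\kappa^2-1}$, $I(P,b)=\frac{b+\sqrt{(\kappa^2-1)(\kappa^2|P|^2-b^2)}}{\kappa^2|P|}$, $\Gamma(P,b)=\{h(x,P,b)x:x\cdot P\ge I(P,b)|P|\}$. Near field refractor: $\mathcal R=\{\rho(x)x\}\subset\mathcal C_{r_0}=\{tx:x\in\bar\Omega,0<t\le r_0\}$ such that for each $x_0\in\bar\Omega$ there are $P\in\bar D$, $b\in(\kappa|P|,|P|)$ with $\rho\ge h(\cdot,P,b)$ on $\bar\Omega$, $\rho(x_0)=h(x_0,P,b)$, $\bar\Omega\subset\{x:x\cdot\frac P{|P|}\ge I(P,b)\}$ (''$\Gamma(P,b)$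 supports $\mathcal R$ at $\rho(x_0)x_0$''). Case $-1<\kappa<0$: there is $\tau\in(0,1+\kappa)$ with $x\cdot P\ge(\tau-\kappa)|P|$ on $\bar\Omega\times\bar D$; $r_0\in(0,\frac\tau{1-\kappa}\operatorname{dist}(0,\bar D))$; $h(x,P,b)=\frac{(b-\kappa^2x\cdot P)+\sqrt{(b-\kappa^2x\cdot P)^2-(1-\kappa^2)(b^2-\kappa^2|P|^2)}}{1-\kappa^2}$, $\mathcal O(P,b)=\{h(x,P,b)x:x\cdot P\ge b\}$. Near field refractor: $\mathcal R\subset\mathcal C_{r_0}$ such that for each $x_0$ there are $P\in\bar D$, $b\in(\kappa|P|,|P|)$ with $\rho\le h(\cdot,P,b)$ on $\bar\Omega$ and $\rho(x_0)=h(x_0,P,b)$ (''$\mathcal O(P,b)$ supports $\mathcal R$ at $\rho(x_0)x_0$''). In both cases for all $m\in S^{n-1}$, $x\in\mathcal C_{r_0}$, $\bar D\cap\{x+tm:t\ge0\}$ has at most one point. $\mathcal N_{\mathcal R}(x)=\{P\in\bar D:$ some oval with focus data $(P,b)$ supports $\mathcal R$ at $\rho(x)x\}$; $\mathcal T_{\mathcal R}(P)=\{x\in\bar\Omega:P\in\mathcal N_{\mathcal R}(x)\}$. *)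

(* Defs.v *)
From HB Require Import structures.
From mathcomp Require Import all_boot all_order all_algebra.
From mathcomp Require Import all_classical all_reals all_analysis.
Set Implicit Arguments. Unset Strict Implicit. Unset Printing Implicit Defensive.
Import Order.TTheory GRing.Theory Num.Theory numFieldNormedType.Exports.
Local Open Scope classical_set_scope.
Local Open Scope ring_scope.

Section NearField.
Variables (R : realType) (n : nat).
Notation vec := 'rV[R]_n.

(* Euclidean inner product and norm (the library norm on matrices is the max norm) *)
Definition dotp (x y : vec) : R := \sum_(i < n) x ord0 i * y ord0 i.
Definition enorm (x : vec) : R := Num.sqrt (dotp x x).

Definition sphere : set vec := [set x | enorm x = 1].

Definition sphere_domain (Omega : set vec) : Prop :=
  [/\ Omega !=set0, Omega `<=` sphere,
      (exists U : set vec, open U /\ Omega = U `&` sphere) & connected Omega].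

Definition sphere_boundary (Omega : set vec) : set vec :=
  [set x | sphere x /\ forall e : R, 0 < e ->
     (exists2 y, Omega y & enorm (y - x) < e) /\
     (exists2 y, (sphere `\` Omega) y & enorm (y - x) < e)].

(* (n-1)-dimensional Hausdorff (= surface) measure zero *)
Definition surface_null (A : set vec) : Prop :=
  forall eps : R, 0 < eps -> exists (c : nat -> vec) (r : nat -> R),
    (forall i, 0 <= r i) /\
    (A `<=` \bigcup_i [set x | enorm (x - c i) < r i]) /\
    (forall N, \sum_(i < N) (r i) ^+ n.-1 < eps).

Definition evec (i : 'I_n) : vec := delta_mx ord0 i.

Definition partial_derivable (F : vec -> R) (i : 'I_n) (x : vec) : Prop :=
  derivable (fun t : R => F (x + t *: evec i)) 0 1.
Definition partial (F : vec -> R) (i : 'I_n) (x : vec) : R :=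
  derive1 (fun t : R => F (x + t *: evec i)) 0.

Definition hypersurface (S : set vec) : Prop :=
  forall p, S p -> exists (U : set vec) (F : vec -> R),
    [/\ open U /\ U p,
        (forall i x, U x -> partial_derivable F i x),
        (forall i x, U x -> {for x, continuous (partial F i)}),
        S `&` U = [set x | U x /\ F x = 0] &
        (forall x, (S `&` U) x -> exists i, partial F i x != 0)].

Definition target_set (D : set vec) : Prop :=
  [/\ (exists S, hypersurface S /\ D `<=` S), compact (closure D) &
      ~ closure D 0].

Definition cone (Omega : set vec) (r0 : R) : set vec :=
  [set z | exists x t, [/\ closure Omega x, 0 < t, t <= r0 & z = t *: x]].

Definition h_ellipsoid (kappa : R) (x P : vec) (b : R) : R :=
  ((kappa ^+ 2 * dotp x P - b) -
    Num.sqrt ((kappa ^+ 2 * dotp x P - b) ^+ 2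
              - (kappa ^+ 2 - 1) * (kappa ^+ 2 * enorm P ^+ 2 - b ^+ 2)))
  / (kappa ^+ 2 - 1).
Definition I_ellipsoid (kappa : R) (P : vec) (b : R) : R :=
  (b + Num.sqrt ((kappa ^+ 2 - 1) * (kappa ^+ 2 * enorm P ^+ 2 - b ^+ 2)))
  / (kappa ^+ 2 * enorm P).

Definition h_oval (kappa : R) (x P : vec) (b : R) : R :=
  ((b - kappa ^+ 2 * dotp x P) +
    Num.sqrt ((b - kappa ^+ 2 * dotp x P) ^+ 2
              - (1 - kappa ^+ 2) * (b ^+ 2 - kappa ^+ 2 * enorm P ^+ 2)))
  / (1 - kappa ^+ 2).

Definition standing (kappa tau r0 : R) (Omega D : set vec) : Prop :=
  [/\ sphere_domain Omega, surface_null (sphere_boundary Omega), target_set D,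
      (kappa < -1 /\
        [/\ 0 < tau, tau < 1 - kappa^-1,
            (forall x P, closure Omega x -> closure D P ->
               tau + kappa^-1 <= dotp x P / enorm P),
            0 < r0 &
            r0 < tau ^+ 2 * kappa ^+ 2
                 / ((1 + Num.sqrt 2) ^+ 2 * (1 - kappa) ^+ 2)
                 * inf [set enorm P | P in closure D]])
      \/
      (-1 < kappa /\ kappa < 0 /\
        [/\ 0 < tau, tau < 1 + kappa,
            (forall x P, closure Omega x -> closure D P ->
               (tau - kappa) * enorm P <= dotp x P),
            0 < r0 &
            r0 < tau / (1 - kappa) * inf [set enorm P | P in closure D]]) &
      (forall (m x : vec), sphere m -> cone Omega r0 x ->
         forall P Q, closure D P -> closure D Q ->
         (exists2 t : R, 0 <= t & P = x + t *: m) ->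
         (exists2 t : R, 0 <= t & Q = x + t *: m) -> P = Q)].

(* "the oval with focus data (P,b) supports R = {rho(x) x} at rho(x0) x0" *)
Definition supports (kappa : R) (Omega : set vec) (rho : vec -> R)
    (x0 P : vec) (b : R) : Prop :=
  [/\ kappa * enorm P < b, b < enorm P &
    if kappa < -1 then
      [/\ (forall x, closure Omega x -> h_ellipsoid kappa x P b <= rho x),
          rho x0 = h_ellipsoid kappa x0 P b &
          (forall x, closure Omega x -> I_ellipsoid kappa P b <= dotp x P / enorm P)]
    else
      (forall x, closure Omega x -> rho x <= h_oval kappa x P b) /\
      rho x0 = h_oval kappa x0 P b].

Definition near_field_refractor (kappa r0 : R) (Omega D : set vec)
    (rho : vec -> R) : Prop :=
  (forall x, closure Omega x -> cone Omega r0 (rho x *: x)) /\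
  (forall x0, closure Omega x0 ->
     exists P b, closure D P /\ supports kappa Omega rho x0 P b).

Definition normal_map (kappa : R) (Omega D : set vec) (rho : vec -> R)
    (x : vec) : set vec :=
  [set P | closure D P /\ exists b, supports kappa Omega rho x P b].

Definition tracing_map (kappa : R) (Omega D : set vec) (rho : vec -> R)
    (P : vec) : set vec :=
  [set x | closure Omega x /\ normal_map kappa Omega D rho x P].

End NearField.

(* Main.v *)
Require Import Defs.
From HB Require Import structures.
From mathcomp Require Import all_boot all_order all_algebra.
From mathcomp Require Import all_classical all_reals all_analysis.
From mathcomp Require Import ring lra.
Import Order.TTheory GRing.Theory Num.Theory numFieldNormedType.Exports.
Local Open Scope classical_set_scope.
Local Open Scope ring_scope.

Section H.
Variables (R : realType) (n : nat).
Notation vec := 'rV[R]_n.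

Lemma dotp_ge0 (x : vec) : 0 <= dotp x x.
Proof. by apply: sumr_ge0 => i _; rewrite -expr2 sqr_ge0. Qed.

Lemma dotp_eq0 (x : vec) : dotp x x = 0 -> x = 0.
Proof.
move=> /eqP; rewrite psumr_eq0; last by move=> i _; rewrite -expr2 sqr_ge0.
move=> /allP H; apply/rowP => i; rewrite mxE.
have := H i (mem_index_enum _); rewrite /= mulf_eq0 orbb => /eqP //.
Qed.

Lemma enorm_gt0 (x : vec) : x != 0 -> 0 < enorm x.
Proof.
move=> x0; rewrite /enorm sqrtr_gt0 lt_def dotp_ge0 andbT.
by apply/eqP => /dotp_eq0 /eqP; apply/negP.
Qed.

Lemma dotpZB (a : R) (u v : vec) :
  dotp (a *: u - v) (a *: u - v) = a ^+ 2 * dotp u u - 2 * a * dotp u v + dotp v v.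
Proof.
rewrite /dotp !mulr_sumr -sumrB -big_split /=; apply: eq_bigr => i _.
rewrite !mxE; ring.
Qed.

Lemma dotpZ (a : R) (u : vec) : dotp (a *: u) (a *: u) = a ^+ 2 * dotp u u.
Proof. rewrite /dotp !mulr_sumr; apply: eq_bigr => i _; rewrite !mxE; ring. Qed.

Lemma enormZ (a : R) (u : vec) : enorm (a *: u) = `|a| * enorm u.
Proof. by rewrite /enorm dotpZ sqrtrM ?sqr_ge0 // sqrtr_sqr. Qed.

Lemma cauchy_schwarz1 (x P : vec) : dotp x x = 1 -> dotp x P <= enorm P.
Proof.
move=> x1; have [->|P0] := eqVneq P 0.
  by rewrite /dotp big1 ?sqrtr_ge0 // => i _; rewrite mxE mulr0.
have p0 := @enorm_gt0 P P0.
have := dotp_ge0 (enorm P *: x - P); rewrite dotpZB x1.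
have -> : dotp P P = enorm P ^+ 2 by rewrite /enorm sqr_sqrtr // dotp_ge0.
move=> h; nra.
Qed.

Lemma dotp_continuous (P : vec) : continuous (fun x : vec => dotp x P).
Proof.
rewrite /dotp.
apply: (@continuous_big R _ +%R 0 xpredT) => [[a b]|i _].
  exact: add_continuous.
move=> x; have h := @coord_continuous R 1 n ord0 i x; exact: (cvgMr_tmp h).
Qed.

Lemma dotpxx_continuous : continuous (fun x : vec => dotp x x).
Proof.
rewrite /dotp.
apply: (@continuous_big R _ +%R 0 xpredT) => [[a b]|i _].
  exact: add_continuous.
move=> x; have h := @coord_continuous R 1 n ord0 i x; exact: (cvgM h h).
Qed.

Lemma sphere_closed : closed (@sphere R n).
Proof.
have -> : @sphere R n = (fun x => enorm x) @^-1` [set 1] by [].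
apply: preimage_closed; last exact: closed_eq.
move=> x _; exact: (continuous_comp (dotpxx_continuous x) (@sqrt_continuous R _)).
Qed.

End H.

Section Hf.
Variable R : realType.
Definition He (k p s b : R) :=
  ((k ^+ 2 * s - b) - Num.sqrt ((k ^+ 2 * s - b) ^+ 2 - (k ^+ 2 - 1) * (k ^+ 2 * p ^+ 2 - b ^+ 2)))
  / (k ^+ 2 - 1).
Definition Ho (k p s b : R) :=
  ((b - k ^+ 2 * s) + Num.sqrt ((b - k ^+ 2 * s) ^+ 2 - (1 - k ^+ 2) * (b ^+ 2 - k ^+ 2 * p ^+ 2)))
  / (1 - k ^+ 2).
Definition Ie (k p b : R) :=
  (b + Num.sqrt ((k ^+ 2 - 1) * (k ^+ 2 * p ^+ 2 - b ^+ 2))) / (k ^+ 2 * p).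

Lemma hE n k (x P : 'rV[R]_n) b : h_ellipsoid k x P b = He k (enorm P) (dotp x P) b.
Proof. by []. Qed.
Lemma hO n k (x P : 'rV[R]_n) b : h_oval k x P b = Ho k (enorm P) (dotp x P) b.
Proof. by []. Qed.
Lemma iE n k (P : 'rV[R]_n) b : I_ellipsoid k P b = Ie k (enorm P) b.
Proof. by []. Qed.


Lemma He_lo k p s : k < -1 -> 0 < p -> 0 < k ^+ 2 * s - k * p -> He k p s (k * p) = 0.
Proof.
move=> k1 p0 A0; rewrite /He.
have -> : (k ^+ 2 * s - k * p) ^+ 2 - (k ^+ 2 - 1) * (k ^+ 2 * p ^+ 2 - (k * p) ^+ 2)
  = (k ^+ 2 * s - k * p) ^+ 2 by ring.
by rewrite sqrtr_sqr ger0_norm ?subrr ?mul0r // ltW.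
Qed.

Lemma sq_id_e (k p : R) : (k ^+ 2 - 1) * (k ^+ 2 * p ^+ 2 - p ^+ 2) = ((k ^+ 2 - 1) * p) ^+ 2.
Proof. ring. Qed.

Lemma Ie_hi k p : k < -1 -> 0 < p -> Ie k p p = 1.
Proof.
move=> k1 p0; rewrite /Ie sq_id_e sqrtr_sqr ger0_norm; last first.
  apply: mulr_ge0; last exact: ltW. 
  by rewrite subr_ge0; nra.
have kp : k ^+ 2 * p != 0 by apply: lt0r_neq0; apply: mulr_gt0 => //; nra.
apply/eqP; rewrite -[X in _ == X](divff kp); apply/eqP; congr (_ / _); ring.
Qed.

Lemma He_hi k p : k < -1 -> 0 < p -> He k p p p = p.
Proof.
move=> k1 p0; rewrite /He.
have -> : (k ^+ 2 * p - p) ^+ 2 - (k ^+ 2 - 1) * (k ^+ 2 * p ^+ 2 - p ^+ 2) = 0 by ring.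
rewrite sqrtr0 subr0.
have k2 : k ^+ 2 - 1 != 0 by apply: lt0r_neq0; nra.
by field.
Qed.

Lemma Ho_lo k p s : -1 < k -> k < 0 -> 0 < p -> 0 < p - k * s -> Ho k p s (k * p) = 0.
Proof.
move=> k1 k0 p0 A0; rewrite /Ho.
have -> : (k * p - k ^+ 2 * s) ^+ 2 - (1 - k ^+ 2) * ((k * p) ^+ 2 - k ^+ 2 * p ^+ 2)
  = (k * p - k ^+ 2 * s) ^+ 2 by ring.
rewrite sqrtr_sqr ltr0_norm ?subrr ?mul0r //.
have -> : k * p - k ^+ 2 * s = k * (p - k * s) by ring.
by rewrite pmulr_llt0.
Qed.

Lemma Ho_hi k p s : -1 < k -> k < 0 -> 0 < p -> s <= p -> p <= Ho k p s p.
Proof.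
move=> k1 k0 p0 sp; rewrite /Ho.
have k2 : 0 < 1 - k ^+ 2 by nra.
rewrite ler_pdivlMr //.
have := sqrtr_ge0 ((p - k ^+ 2 * s) ^+ 2 - (1 - k ^+ 2) * (p ^+ 2 - k ^+ 2 * p ^+ 2)).
nra.
Qed.
Lemma sqrt_cvg (u : nat -> R) (a : R) : u @ \oo --> a -> (fun t => Num.sqrt (u t)) @ \oo --> Num.sqrt a.
Proof. move=> h; exact: (continuous_cvg _ (@sqrt_continuous R a) h). Qed.

Lemma sq_cvg (u : nat -> R) (a : R) : u @ \oo --> a -> (fun t => u t ^+ 2) @ \oo --> a ^+ 2.
Proof. move=> h; rewrite expr2; under eq_cvg do rewrite expr2. exact: cvgM. Qed.

Lemma He_cvg k p (u v : nat -> R) (s b : R) : u @ \oo --> s -> v @ \oo --> b ->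
  (fun t => He k p (u t) (v t)) @ \oo --> He k p s b.
Proof.
move=> us vb; rewrite /He; apply: cvgMr_tmp.
have h1 : (fun t => k ^+ 2 * u t - v t) @ \oo --> k ^+ 2 * s - b.
  by apply: cvgB => //; apply: cvgMl_tmp.
apply: cvgB => //; apply: sqrt_cvg; apply: cvgB; first exact: sq_cvg.
apply: cvgMl_tmp; apply: cvgB; first exact: cvg_cst.
exact: sq_cvg.
Qed.

Lemma Ho_cvg k p (u v : nat -> R) (s b : R) : u @ \oo --> s -> v @ \oo --> b ->
  (fun t => Ho k p (u t) (v t)) @ \oo --> Ho k p s b.
Proof.
move=> us vb; rewrite /Ho; apply: cvgMr_tmp.
have h1 : (fun t => v t - k ^+ 2 * u t) @ \oo --> b - k ^+ 2 * s.
  by apply: cvgB => //; apply: cvgMl_tmp.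
apply: cvgD => //; apply: sqrt_cvg; apply: cvgB; first exact: sq_cvg.
apply: cvgMl_tmp; apply: cvgB; last exact: cvg_cst.
exact: sq_cvg.
Qed.

Lemma Ie_cvg k p (v : nat -> R) (b : R) : v @ \oo --> b ->
  (fun t => Ie k p (v t)) @ \oo --> Ie k p b.
Proof.
move=> vb; rewrite /Ie; apply: cvgMr_tmp.
apply: cvgD => //; apply: sqrt_cvg.
apply: cvgMl_tmp; apply: cvgB; first exact: cvg_cst.
exact: sq_cvg.
Qed.
End Hf.
Arguments He_cvg {R k p u v s b}.
Arguments Ho_cvg {R k p u v s b}.
Arguments Ie_cvg {R k p v b}.
Arguments Ho_hi {R k p s}.


Section S.
Variables (R : realType) (n : nat).
Notation vec := 'rV[R]_n.

Lemma incr_ge (f : nat -> nat) : increasing_seq f -> forall k, (k <= f k)%N.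
Proof.
move=> fi; elim=> // k ih.
have : (f k < f k.+1)%N.
  have := fi k.+1 k; rewrite ltnn leEnat => h; by rewrite ltnNge h.
by apply: leq_trans.
Qed.

Lemma seq_extract (T : set vec) (B : vec -> R -> Prop) (lo hi : R) (x : vec) :
  closure T x -> (forall y, T y -> exists2 b, lo <= b <= hi & B y b) ->
  exists (xs : nat -> vec) (bs : nat -> R) (b : R),
    [/\ forall k, T (xs k) /\ B (xs k) (bs k), xs @ \oo --> x, bs @ \oo --> b & lo <= b <= hi].
Proof.
move=> clx hB.
have h1 : forall k : nat, exists y, T y /\ `|x - y| < k.+1%:R^-1.
  move=> k.
  have kp : 0 < k.+1%:R^-1 :> R by rewrite invr_gt0 ltr0Sn.
  have := @nbhs_ball_norm _ _ x (PosNum kp).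
  by move=> /clx [y [Ty yb]]; exists y.
have [xs hxs] := choice h1.
have h2 : forall k, exists b, (lo <= b <= hi) /\ B (xs k) b.
  by move=> k; have [b ? ?] := hB _ (hxs k).1; exists b.
have [bs hbs] := choice h2.
have bnd : bounded_fun bs.
  rewrite /bounded_near; near=> M => k _ /=.
  have /andP[h3 h4] := (hbs k).1.
  apply: (@le_trans _ _ (`|lo| + `|hi|)).
    rewrite ler_norml; apply/andP; split.
      apply: le_trans h3; rewrite lerNl; apply: le_trans (ler_norm _) _.
      by rewrite normrN lerDl.
    by apply: le_trans h4 _; apply: le_trans (ler_norm _) _; rewrite lerDr.
  near: M; apply: nbhs_pinfty_ge; exact: num_real.
have [f fi fcv] := bolzano_weierstrass bnd.
exists (xs \o f), (bs \o f), (lim (bs \o f @ \oo)); split.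
- by move=> k; split; [exact: (hxs _).1 | exact: (hbs _).2].
- apply/cvgrPdist_lt => e e0.
  near=> k => /=.
  apply: lt_trans (hxs (f k)).2 _.
  apply: le_lt_trans (_ : k.+1%:R^-1 < e).
    rewrite lef_pV2 ?posrE ?ltr0Sn // ler_nat ltnS; exact: incr_ge.
  near: k; exact: (@near_infty_natSinv_lt R (PosNum e0)).
- exact: fcv.
- apply/andP; split.
    apply: (@closed_cvg _ _ \oo _ (bs \o f) (fun t => lo <= t) (@closed_ge R lo)) => //.
    by apply: nearW => k /=; have /andP[] := (hbs (f k)).1.
  apply: (@closed_cvg _ _ \oo _ (bs \o f) (fun t => t <= hi) (@closed_le R hi)) => //.
  by apply: nearW => k /=; have /andP[] := (hbs (f k)).1.
Unshelve. all: by end_near.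
Qed.
End S.

Lemma aux_lt {R : realType} {c i r p : R} : r < c * i -> c <= 1 -> 0 <= i -> i <= p -> r < p.
Proof. move=> *; nra. Qed.

Theorem lemma3p5 (R : realType) (n : nat) (kappa tau r0 : R)
    (Omega D : set 'rV[R]_n) (rho : 'rV[R]_n -> R) (P : 'rV[R]_n) :
  standing kappa tau r0 Omega D ->
  near_field_refractor kappa r0 Omega D rho ->
  closure D P ->
  closed (tracing_map kappa Omega D rho P) /\
  tracing_map kappa Omega D rho P `<=` closure Omega.
Proof.
move=> [[Om0 Omsph _ _] _ [_ _ nD0] hcase ray] [hcone hsupp] PD.
set T := tracing_map kappa Omega D rho P.
have Tsub : T `<=` closure Omega by move=> y [].
split=> //.
have clsph : closure Omega `<=` @sphere R n.
  move=> y /(closureS Omsph).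
  by rewrite -((closure_id _).1 (@sphere_closed R n)).
have dotp1 y : closure Omega y -> dotp y y = 1.
  move=> /clsph; rewrite /sphere /= /enorm => h.
  by rewrite -(sqr_sqrtr (@dotp_ge0 R n y)) h expr1n.
have rhofacts y : closure Omega y -> rho y != 0 /\ rho y <= r0.
  move=> yc; have [z [t [zc t0 tr e]]] := hcone y yc.
  have h : `|rho y| = t.
    have := congr1 (@enorm R n) e; rewrite !(@enormZ R n).
    have sy : enorm y = 1 := clsph _ yc.
    have sz : enorm z = 1 := clsph _ zc.
    by rewrite sy sz !mulr1 => ->; rewrite gtr0_norm.
  split; first by rewrite -normr_eq0 h; exact: lt0r_neq0.
  by apply: le_trans (ler_norm _) _; rewrite h.
have P0 : P != 0 by apply/eqP => P0; apply: nD0; rewrite -P0.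
have p0 := @enorm_gt0 R n P P0.
have r0p : r0 < enorm P.
  pose S := [set enorm Q | Q in closure D].
  have hl : has_lbound S by exists 0 => _ [Q _ <-]; exact: sqrtr_ge0.
  have iP : inf S <= enorm P by apply: (ge_inf hl); exists P.
  have i0 : 0 <= inf S.
    apply: lb_le_inf; first by exists (enorm P), P.
    by move=> _ [Q _ <-]; exact: sqrtr_ge0.
  case: hcase => [[k1 [t0 tl _ r0p r0l]] | [k1 [k0 [t0 tl _ r0p r0l]]]].
  - have c1 : tau ^+ 2 * kappa ^+ 2 / ((1 + Num.sqrt 2) ^+ 2 * (1 - kappa) ^+ 2) <= 1.
      have s0 := @sqrtr_ge0 R 2.
      have d0 : 0 < (1 + Num.sqrt 2) ^+ 2 * (1 - kappa) ^+ 2.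
        by apply: mulr_gt0; apply: exprn_gt0; lra.
      rewrite ler_pdivrMr // mul1r.
      have kn : kappa != 0 by apply: ltr0_neq0; lra.
      have ki : kappa * kappa^-1 = 1 by rewrite mulfV.
      have h1 : - tau * kappa < 1 - kappa by nra.
      have h0 : 0 < - tau * kappa by nra.
      have h0' : 0 < 1 - kappa + - tau * kappa by lra.
      have h2 : tau ^+ 2 * kappa ^+ 2 <= (1 - kappa) ^+ 2.
        have h5 : 0 < 1 - kappa - - tau * kappa by lra.
        have := mulr_gt0 h0' h5; nra.
      move: s0 d0; set q := Num.sqrt 2 => s0 d0.
      have h3 : 1 <= (1 + q) ^+ 2 by rewrite expr2; nra.
      have h6 : 0 <= (1 - kappa) ^+ 2 by apply: sqr_ge0.
      have := ler_wpM2r h6 h3; rewrite mul1r => h7.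
      lra.
    by apply: (aux_lt r0l c1); [exact: i0 | exact: iP].
  - have c1 : tau / (1 - kappa) <= 1 by rewrite ler_pdivrMr ?mul1r; lra.
    by apply: (aux_lt r0l c1); [exact: i0 | exact: iP].
rewrite closure_id; apply/seteqP; split; first exact: subset_closure.
move=> x clx.
have xc : closure Omega x.
  have := closureS Tsub clx.
  by rewrite -((closure_id _).1 (@closed_closure _ Omega)).
have hB : forall y, T y -> exists2 b, kappa * enorm P <= b <= enorm P &
    supports kappa Omega rho y P b.
  move=> y [_ [_ [b hs]]]; exists b => //.
  by case: hs => l h _; rewrite !ltW.
have [xs [bs [b [hk xcv bcv /andP[blo bhi]]]]] := @seq_extract R n _ _ _ _ x clx hB.
have scv Q : (fun k => dotp (xs k) Q) @ \oo --> dotp x Q.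
  exact: (continuous_cvg _ (@dotp_continuous R n Q x) xcv).
have [Q [b0 [QD hsx]]] := hsupp x xc.
have [rx0 rxr] := rhofacts x xc.
have cs := @cauchy_schwarz1 R n x P (dotp1 x xc).
split => //; split => //; exists b.
case: hcase => [[k1 [t0 tl hdot _ _]] | [k1 [k0 [t0 tl hdot _ _]]]].
- move: hsx; rewrite /supports k1 => -[_ _ [geQ eqQ _]].
  have hk' k : [/\ forall y, closure Omega y -> h_ellipsoid kappa y P (bs k) <= rho y,
      rho (xs k) = h_ellipsoid kappa (xs k) P (bs k) &
      forall y, closure Omega y -> I_ellipsoid kappa P (bs k) <= dotp y P / enorm P].
    by move: (hk k).2; rewrite /supports k1 => -[].
  have ha y : closure Omega y -> h_ellipsoid kappa y P b <= rho y.
    move=> yc; rewrite hE.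
    apply: (ler_cvg_to (He_cvg (cvg_cst (dotp y P)) bcv) (cvg_cst (rho y))).
    by apply: nearW => k; have [h _ _] := hk' k; rewrite -hE; exact: h.
  have hi y : closure Omega y -> I_ellipsoid kappa P b <= dotp y P / enorm P.
    move=> yc; rewrite iE.
    apply: (ler_cvg_to (Ie_cvg bcv) (cvg_cst (dotp y P / enorm P))).
    by apply: nearW => k; have [_ _ h] := hk' k; rewrite -iE; exact: h.
  have hc : h_ellipsoid kappa x Q b0 <= h_ellipsoid kappa x P b.
    rewrite !hE; apply: (ler_cvg_to (He_cvg (scv Q) (cvg_cst b0)) (He_cvg (scv P) bcv)).
    apply: nearW => k; have [_ e _] := hk' k; rewrite -hE -hE -e.
    exact: geQ (hk k).1.1.
  have heq : rho x = h_ellipsoid kappa x P b.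
    by apply/eqP; rewrite eq_le ha // eqQ hc.
  rewrite /supports ?k1; split => //.
  + rewrite lt_neqAle blo andbT; apply/eqP => eb.
    have H := hdot x P xc PD; rewrite ler_pdivlMr // in H.
    have kn : kappa != 0 by apply: ltr0_neq0; lra.
    have e : kappa ^+ 2 * (kappa^-1 * enorm P) = kappa * enorm P.
      by rewrite expr2 -mulrA mulVKf.
    have H2 := ler_wpM2l (sqr_ge0 kappa) H.
    have H3 : kappa ^+ 2 * tau * enorm P + kappa * enorm P <= kappa ^+ 2 * dotp x P.
      apply: le_trans H2; rewrite -e le_eqVlt; apply/orP; left; apply/eqP; ring.
    have H4 : 0 < kappa ^+ 2 * tau * enorm P.
      by apply: mulr_gt0 => //; apply: mulr_gt0 => //; nra.
    move: heq; rewrite -eb hE He_lo //; last by lra.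
    by move=> rx; move: rx0; rewrite rx eqxx.
  + rewrite lt_neqAle bhi andbT; apply/eqP => eb.
    have := hi x xc; rewrite iE eb Ie_hi // ler_pdivlMr // mul1r => sp.
    have sP : dotp x P = enorm P by apply/eqP; rewrite eq_le cs sp.
    move: heq; rewrite hE sP eb He_hi // => rx.
    lra.
- have nk : (kappa < -1) = false by apply/negbTE; rewrite -leNgt ltW.
  move: hsx; rewrite /supports nk => -[_ _ [leQ eqQ]].
  have hk' k : (forall y, closure Omega y -> rho y <= h_oval kappa y P (bs k)) /\
      rho (xs k) = h_oval kappa (xs k) P (bs k).
    by move: (hk k).2; rewrite /supports nk => -[].
  have ha y : closure Omega y -> rho y <= h_oval kappa y P b.
    move=> yc; rewrite hO.
    apply: (ler_cvg_to (cvg_cst (rho y)) (Ho_cvg (cvg_cst (dotp y P)) bcv)).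
    by apply: nearW => k; have [h _] := hk' k; rewrite -hO; exact: h.
  have hc : h_oval kappa x P b <= h_oval kappa x Q b0.
    rewrite !hO; apply: (ler_cvg_to (Ho_cvg (scv P) bcv) (Ho_cvg (scv Q) (cvg_cst b0))).
    apply: nearW => k; have [_ e] := hk' k; rewrite -hO -hO -e.
    exact: leQ (hk k).1.1.
  have heq : rho x = h_oval kappa x P b.
    by apply/eqP; rewrite eq_le ha // eqQ hc.
  rewrite /supports ?nk; split => //.
  + rewrite lt_neqAle blo andbT; apply/eqP => eb.
    have H := hdot x P xc PD.
    move: heq; rewrite -eb hO Ho_lo //; last by nra.
    by move=> rx; move: rx0; rewrite rx eqxx.
  + rewrite lt_neqAle bhi andbT; apply/eqP => eb.
    have := Ho_hi k1 k0 p0 cs.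
    rewrite -hO -eb -heq => h.
    lra.
Qed.
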